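(* As $N\to\infty$, $$R_N:=\sum_{n=1}^N\Big\{\frac{1}{2^{2n}}\binom{2n}{n}\Big\}^2=\frac{\log N+\alpha}{\pi}+o(1),\qquad\alpha:=\gamma+\log16-\pi,$$ where $\gamma$ is the Euler–Mascheroni constant.
   Context: $\gamma=-\int_0^\infty\log u\,e^{-u}\mathrm du$. *)

(* Defs.v *)
From Stdlib Require Import Reals.
Open Scope R_scope.

Definition improper_int_0_inf (f : R -> R) (l : R) : Prop :=
  forall eps : R, 0 < eps ->
  exists d M : R, 0 < d /\ 0 < M /\
    forall a b : R, 0 < a < d -> M < b ->
      exists pr : Riemann_integrable f a b, Rabs (RiemannInt pr - l) < eps.

Definition is_euler_gamma (g : R) : Prop :=
  improper_int_0_inf (fun u => ln u * exp (- u)) (- g).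

Definition cb_term (n : nat) : R := (C (2 * n) n / 2 ^ (2 * n)) ^ 2.

Definition R_N (N : nat) : R :=
  match N with
  | O => 0
  | S m => sum_f_R0 (fun k => cb_term (S k)) m
  end.

Definition alpha (g : R) : R := g + ln 16 - PI.

(* Main.v *)
Require Import Defs.
From Coquelicot Require Import Coquelicot.
From Stdlib Require Import Reals Lra Lia ZArith.
Open Scope R_scope.

Lemma FTC (F f : R -> R) a b : a <= b ->
  (forall x, a <= x <= b -> is_derive F x (f x)) ->
  (forall x, a <= x <= b -> continuous f x) ->
  is_RInt f a b (F b - F a).
Proof.
  intros Hab HD HC.
  apply (is_RInt_derive F f a b).
  - intros x Hx; rewrite Rmin_left, Rmax_right in Hx by lra; auto.
  - intros x Hx; rewrite Rmin_left, Rmax_right in Hx by lra; auto.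
Qed.

Lemma is_RInt_val (f : R -> R) a b (l l' : R) : is_RInt f a b l -> l = l' -> is_RInt f a b l'.
Proof. intros H ->; exact H. Qed.

Lemma cont_of_der (f:R->R) x: ex_derive f x -> continuous f x.
Proof. intro H. exact (ex_derive_continuous f x H). Qed.

Lemma PI2_pos : 0 < PI/2.
Proof. generalize PI_RGT_0; lra. Qed.

Lemma wallis_step m : is_RInt (fun t => INR (m+2) * sin t ^ (m+2) - INR (m+1) * sin t ^ m) 0 (PI/2) 0.
Proof.
  eapply is_RInt_val.
  apply (FTC (fun t => - cos t * sin t ^ (m+1))). generalize PI2_pos; lra.
  - intros y _. auto_derive; auto.
    replace (m+2)%nat with (S (S m)) by lia. rewrite Nat.add_1_r. simpl pred.
    rewrite !S_INR. simpl.
    assert (H:= sin2_cos2 y). unfold Rsqr in H.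
    assert (Hc: cos y * cos y = 1 - sin y * sin y) by lra.
    replace (- cos y * (1 * cos y * ((INR m + 1) * sin y ^ m))) with (-(cos y * cos y) * ((INR m+1) * sin y^m)) by ring.
    rewrite Hc. ring.
  - intros y _. apply cont_of_der. auto_derive. auto.
  -   - rewrite cos_PI2, sin_0. rewrite Nat.add_1_r. simpl. ring.
Qed.
Definition cc (n : nat) : R := C (2 * n) n / 2 ^ (2 * n).
Lemma cc0 : cc 0 = 1.
Proof. unfold cc, C. simpl. field. Qed.
Lemma ccS n : cc (S n) = cc n * (2 * INR n + 1) / (2 * INR n + 2).
Proof.
  unfold cc, C.
  replace (2 * S n - S n)%nat with (S n) by lia.
  replace (2 * n - n)%nat with n by lia.
  replace (2 * S n)%nat with (S (S (2 * n))) by lia.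
  rewrite !fact_simpl. rewrite !mult_INR.
  replace (S (S (2*n))) with (2 * n + 2)%nat by lia.
  rewrite pow_add. rewrite !S_INR, plus_INR, mult_INR. simpl INR.
  assert (H1 := INR_fact_neq_0 n). assert (H2 := INR_fact_neq_0 (2*n)).
  assert (H3 : 0 < 2 ^ (2*n)) by (apply pow_lt; lra).
  assert (H4 : 0 <= INR n) by apply pos_INR.
  field. repeat split; try lra.
Qed.

Lemma cc_pos n : 0 < cc n.
Proof.
  induction n. rewrite cc0; lra.
  rewrite ccS. assert (0 <= INR n) by apply pos_INR.
  apply Rdiv_lt_0_compat; [apply Rmult_lt_0_compat|]; lra.
Qed.

Lemma cc2_le n : cc n ^ 2 <= 1 / (INR n + 1).
Proof.
  induction n. rewrite cc0; simpl; lra.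
  rewrite ccS, S_INR. assert (0 <= INR n) by apply pos_INR.
  set (x := INR n) in *.
  assert (E: (cc n * (2 * x + 1) / (2 * x + 2)) ^ 2 = cc n ^2 * ((2*x+1)^2/(2*x+2)^2)) by (field; lra).
  rewrite E.
  apply Rle_trans with (1 / (x + 1) * ((2 * x + 1) ^ 2 / (2 * x + 2) ^ 2)).
  apply Rmult_le_compat_r. unfold Rdiv; apply Rmult_le_pos; [apply pow2_ge_0| apply Rlt_le, Rinv_0_lt_compat; apply pow_lt; lra]. exact IHn.
  apply Rmult_le_reg_r with ((x+1+1)*(x+1)*(2*x+2)^2). 
  apply Rmult_lt_0_compat. apply Rmult_lt_0_compat; lra. nra.
  field_simplify; try lra.
Qed.

Lemma isR_plus f g a b x y : is_RInt f a b x -> is_RInt g a b y -> is_RInt (fun t => f t + g t) a b (x+y).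
Proof. intros H1 H2. exact (is_RInt_plus f g a b x y H1 H2). Qed.
Lemma isR_minus f g a b x y : is_RInt f a b x -> is_RInt g a b y -> is_RInt (fun t => f t - g t) a b (x-y).
Proof. intros H1 H2. exact (is_RInt_minus f g a b x y H1 H2). Qed.
Lemma isR_scal f a b k x : is_RInt f a b x -> is_RInt (fun t => k * f t) a b (k*x).
Proof. intros H1. exact (is_RInt_scal f a b k x H1). Qed.
Lemma isR_const a b v : is_RInt (fun _ => v) a b ((b-a)*v).
Proof. exact (is_RInt_const a b v). Qed.
Lemma isR_uniq (f : R -> R) a b x y : is_RInt f a b x -> is_RInt f a b y -> x = y.
Proof. intros H1 H2. rewrite <- (is_RInt_unique f a b x H1). apply is_RInt_unique; auto. Qed.
Lemma isR_ext (f g : R -> R) a b x : a <= b -> (forall t, a <= t <= b -> f t = g t) -> is_RInt f a b x -> is_RInt g a b x.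
Proof. intros Hab H. apply is_RInt_ext. intros t Ht. rewrite Rmin_left, Rmax_right in Ht by lra. apply H; lra. Qed.

Lemma RInt_correctR (f:R->R) a b: ex_RInt f a b -> is_RInt f a b (RInt f a b).
Proof. exact (RInt_correct f a b). Qed.
Lemma ex_RInt_contR (f:R->R) a b: (forall z, Rmin a b <= z <= Rmax a b -> continuous f z) -> ex_RInt f a b.
Proof. exact (ex_RInt_continuous f a b). Qed.

Definition Iw m : R := RInt (fun t => sin t ^ m) 0 (PI/2).
Lemma Iw_is m : is_RInt (fun t => sin t ^ m) 0 (PI/2) (Iw m).
Proof.
  apply RInt_correctR. apply ex_RInt_contR. intros z _.
  apply cont_of_der. auto_derive. auto.
Qed.
Lemma Iw_rec m : INR (m+2) * Iw (m+2) = INR (m+1) * Iw m.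
Proof.
  assert (H := isR_minus _ _ _ _ _ _ (isR_scal _ _ _ (INR (m+2)) _ (Iw_is (m+2))) (isR_scal _ _ _ (INR (m+1)) _ (Iw_is m))).
  assert (H2 := isR_uniq _ _ _ _ _ H (wallis_step m)). lra.
Qed.
Lemma Iw0 : Iw 0 = PI/2.
Proof. assert (H : is_RInt (fun t => sin t ^ 0) 0 (PI/2) ((PI/2 - 0) * 1)).
  { apply (isR_ext (fun _ => 1)). generalize PI2_pos; lra.
    intros; simpl; ring. apply isR_const. }
  rewrite (isR_uniq _ _ _ _ _ (Iw_is 0) H). lra. Qed.
Lemma Iw1 : Iw 1 = 1.
Proof. apply (isR_uniq (fun t => sin t ^ 1) 0 (PI/2)). apply Iw_is.
  eapply is_RInt_val. apply (FTC (fun t => - cos t)). generalize PI2_pos; lra.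
  intros y _. auto_derive; auto. ring.
  intros y _. apply cont_of_der. auto_derive; auto.
  rewrite cos_PI2, cos_0. lra. Qed.

Lemma Iw_val n : Iw (2*n) = PI/2 * cc n /\ Iw (2*n+1) = 1 / ((2 * INR n + 1) * cc n).
Proof.
  induction n.
  - simpl. rewrite Iw0, Iw1, cc0. split; field.
  - destruct IHn as [H1 H2]. assert (0 <= INR n) by apply pos_INR. assert (P := cc_pos n).
    set (x := INR n) in *.
    split.
    + assert (Hr := Iw_rec (2*n)). replace (2 * S n)%nat with (2*n+2)%nat by lia.
      rewrite H1 in Hr. rewrite !plus_INR, mult_INR in Hr. simpl INR in Hr. fold x in Hr.
      set (A := Iw (2*n+2)) in *.
      assert (R' : (2*x+2)*A = (2*x+1)*(PI/2 * cc n)) by lra.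
      replace A with ((2*x+2)*A/(2*x+2)) by (field; lra). rewrite R', ccS. fold x. field. lra.
    + assert (Hr := Iw_rec (2*n+1)). replace (2 * S n + 1)%nat with (2*n+1+2)%nat by lia.
      rewrite H2 in Hr. rewrite !plus_INR, mult_INR in Hr. simpl INR in Hr. fold x in Hr.
      set (A := Iw (2*n+1+2)) in *.
      assert (R' : (2*x+3)*A = (2*x+2)*(1 / ((2 * x + 1) * cc n))) by lra.
      replace A with ((2*x+3)*A/(2*x+3)) by (field; lra). rewrite R', ccS, S_INR. fold x. field. repeat split; lra.
Qed.

Fixpoint Qs (N : nat) (t : R) : R := match N with O => 0 | S k => Qs k t + 2 * cc (S k) * sin t ^ (2*k+1) end.
Fixpoint Hs (N : nat) : R := match N with O => 0 | S k => Hs k + 1 / INR (S k) end.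
Fixpoint Ss (N : nat) : R := match N with O => 0 | S k => Ss k + cc (S k) ^ 2 end.

Lemma Q_int N : is_RInt (fun t => (1 - sin t) * Qs N t) 0 (PI/2) (Hs N - PI * Ss N).
Proof.
  assert (HP := PI2_pos).
  induction N.
  - eapply is_RInt_val. apply (isR_ext (fun _ => 0)). lra. intros; simpl; lra. apply isR_const.
    simpl. lra.
  - set (c := cc (S N)).
    assert (H1 := isR_minus _ _ _ _ _ _ (isR_scal _ _ _ (2*c) _ (Iw_is (2*N+1))) (isR_scal _ _ _ (2*c) _ (Iw_is (2*N+2)))).
    assert (H2 := isR_plus _ _ _ _ _ _ IHN H1).
    eapply is_RInt_val. refine (isR_ext _ _ 0 (PI/2) _ _ _ H2). lra.
    + intros t _. simpl Qs. replace (2*N+2)%nat with (S (2*N+1)) by lia. simpl pow. fold c. nra.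
    + destruct (Iw_val N) as [E1 E2]. destruct (Iw_val (S N)) as [E3 _].
      replace (2 * S N)%nat with (2*N+2)%nat in E3 by lia.
      rewrite E2, E3. change (Hs (S N)) with (Hs N + 1 / INR (S N)). change (Ss (S N)) with (Ss N + cc (S N) ^ 2). fold c. unfold c. rewrite ccS, ?S_INR.
      assert (0 <= INR N) by apply pos_INR. assert (P := cc_pos N). field. repeat split; lra.
Qed.

Definition fth (t : R) : R := 2 * sin t * cos t / ((1 + sin t) * (1 + cos t)).

Lemma sc_pos t : 0 <= t <= PI/2 -> 0 <= sin t /\ 0 <= cos t.
Proof. intros H. split. apply sin_ge_0; generalize PI_RGT_0; lra. apply cos_ge_0; generalize PI_RGT_0; lra. Qed.

Lemma alg_f s c : s*s + c*c = 1 -> 0 <= s -> 0 <= c ->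
  2 * 1 + - (2 * (1 * c * / (1 + s))) + 2 * (1 * - s * / (1 + c)) = 2 * s * c / ((1 + s) * (1 + c)).
Proof.
  intros H Hs Hc.
  assert (E : 2 * 1 + - (2 * (1 * c * / (1 + s))) + 2 * (1 * - s * / (1 + c)) - 2 * s * c / ((1 + s) * (1 + c))
     = 2 * (1 - s*s - c*c) / ((1+s)*(1+c))) by (field; lra).
  assert (Z: 1 - s*s - c*c = 0) by lra. rewrite Z in E. unfold Rdiv in E. rewrite Rmult_0_r, Rmult_0_l in E. lra.
Qed.

Lemma f_int : is_RInt fth 0 (PI/2) (PI - 4 * ln 2).
Proof.
  assert (HP := PI2_pos).
  eapply is_RInt_val.
  apply (FTC (fun t => 2 * t - 2 * ln (1 + sin t) + 2 * ln (1 + cos t))). lra.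
  - intros y Hy. destruct (sc_pos y Hy) as [Hs Hc].
    auto_derive. repeat split; lra.
    unfold fth. apply alg_f; auto. assert (H:= sin2_cos2 y). unfold Rsqr in H. lra.
  - intros y Hy. destruct (sc_pos y Hy) as [Hs Hc]. apply cont_of_der. unfold fth. auto_derive.
    repeat split; try lra. apply Rmult_integral_contrapositive; split; lra.
  - rewrite sin_PI2, cos_PI2, sin_0, cos_0. replace (1+0) with 1 by lra. rewrite ln_1. replace (1+1) with 2 by lra. lra.
Qed.

Fixpoint Ps (N : nat) (s : R) : R := match N with O => 1 | S k => Ps k s + cc (S k) * s ^ (2*k+2) end.

Lemma Ps_Qs N t : sin t * Qs N t = 2 * (Ps N (sin t) - 1).
Proof.
  induction N. simpl. ring.
  cbn [Qs Ps]. replace (2*N+2)%nat with (S (2*N+1)) by lia. rewrite <- tech_pow_Rmult.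
  set (p := sin t ^ (2*N+1)). rewrite Rmult_plus_distr_l, IHN. ring.
Qed.

Lemma Ps_0 N : Ps N 0 = 1.
Proof. induction N. reflexivity. cbn [Ps]. rewrite IHN. replace (2*N+2)%nat with (S (2*N+1)) by lia. rewrite <- tech_pow_Rmult. ring. Qed.

Lemma der_cs m t : is_derive (fun t => cos t * sin t ^ (S m)) t (- sin t ^ (S (S m)) + INR (S m) * (cos t * cos t) * sin t ^ m).
Proof.
  auto_derive; auto. simpl pred. rewrite <- !tech_pow_Rmult. set (p := sin t ^ m). change (match m with 0%nat => 1 | S _ => INR m + 1 end) with (INR (S m)). ring.
Qed.
Lemma der_plus (f g : R -> R) x a b: is_derive f x a -> is_derive g x b -> is_derive (fun t => f t + g t) x (a+b).
Proof. intros H1 H2. exact (is_derive_plus f g x a b H1 H2). Qed.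
Lemma der_scal (f : R -> R) x k a: is_derive f x a -> is_derive (fun t => k * f t) x (k*a).
Proof. intros H1. exact (is_derive_scal f x k a H1). Qed.
Lemma der_val (f : R -> R) x (a b : R) : is_derive f x a -> a = b -> is_derive f x b.
Proof. intros H ->; exact H. Qed.
Lemma der_ext (f g : R -> R) x (a : R) : (forall t, f t = g t) -> is_derive f x a -> is_derive g x a.
Proof. intros H1 H2. exact (is_derive_ext f g x a H1 H2). Qed.

Lemma G_der N t : is_derive (fun t => cos t * Ps N (sin t)) t (- (2 * INR N + 1) * cc N * sin t ^ (2*N+1)).
Proof.
  induction N.
  - simpl Ps. auto_derive; auto. rewrite cc0. simpl. ring.
  - assert (H := der_plus _ _ _ _ _ IHN (der_scal _ _ (cc (S N)) _ (der_cs (2*N+1) t))).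
    eapply der_val. eapply der_ext. 2: exact H.
    + intro u. cbn [Ps]. replace (2*N+2)%nat with (S (2*N+1)) by lia. ring.
    + replace (2 * S N + 1)%nat with (S (S (2*N+1))) by lia.
      rewrite <- !tech_pow_Rmult. rewrite ccS. rewrite !S_INR. rewrite plus_INR, mult_INR. simpl INR.
      assert (Hc := sin2_cos2 t). unfold Rsqr in Hc.
      replace (cos t * cos t) with (1 - sin t * sin t) by lra.
      set (p := sin t ^ (2*N+1)). assert (0 <= INR N) by apply pos_INR. field. lra.
Qed.

Lemma der_sc m t : cos t <> 0 -> is_derive (fun t => sin t ^ (S m) / cos t) t (INR (S m) * sin t ^ m + sin t ^ (S (S m)) / (cos t * cos t)).
Proof.
  intro Hc. auto_derive; auto. simpl pred.
  change (match m with 0%nat => 1 | S _ => INR m + 1 end) with (INR (S m)).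
  rewrite <- !tech_pow_Rmult. set (p := sin t ^ m). field. auto.
Qed.

Lemma K_der N t : cos t <> 0 -> is_derive (fun t => cos t * Ps N (sin t) + cc (S N) * (sin t ^ (S (2*N+1)) / cos t)) t
   (cc (S N) * sin t ^ (S (S (2*N+1))) / (cos t * cos t)).
Proof.
  intro Hc.
  eapply der_val. apply der_plus. apply G_der. apply der_scal. apply der_sc; auto.
  rewrite <- !tech_pow_Rmult. rewrite ccS, !S_INR, plus_INR, mult_INR. simpl INR.
  set (p := sin t ^ (2*N+1)). assert (0 <= INR N) by apply pos_INR. field. split; lra.
Qed.

Lemma cpt_of_der (f : R -> R) x l : is_derive f x l -> continuity_pt f x.
Proof. intro H. apply continuity_pt_filterlim. apply cont_of_der. exists l; auto. Qed.

Lemma mono_le (f df : R -> R) a b : a <= b -> (forall x, a <= x <= b -> is_derive f x (df x)) ->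
  (forall x, a <= x <= b -> df x <= 0) -> f b <= f a.
Proof.
  intros Hab Hd Hn. destruct (MVT_gen f a b df) as [c [Hc E]].
  - intros x Hx. rewrite Rmin_left, Rmax_right in Hx by lra. apply Hd; lra.
  - intros x Hx. rewrite Rmin_left, Rmax_right in Hx by lra. eapply cpt_of_der. apply Hd; lra.
  - rewrite Rmin_left, Rmax_right in Hc by lra. assert (Hc' := Hn c Hc). nra.
Qed.

Lemma mono_ge (f df : R -> R) a b : a <= b -> (forall x, a <= x <= b -> is_derive f x (df x)) ->
  (forall x, a <= x <= b -> 0 <= df x) -> f a <= f b.
Proof.
  intros Hab Hd Hn. destruct (MVT_gen f a b df) as [c [Hc E]].
  - intros x Hx. rewrite Rmin_left, Rmax_right in Hx by lra. apply Hd; lra.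
  - intros x Hx. rewrite Rmin_left, Rmax_right in Hx by lra. eapply cpt_of_der. apply Hd; lra.
  - rewrite Rmin_left, Rmax_right in Hc by lra. assert (Hc' := Hn c Hc). nra.
Qed.

Lemma alg_E s c P Q q x : 0 < s -> 0 < c -> s*s + c*c = 1 -> s*Q = 2*(P-1) -> c*P <= 1 ->
  1 <= c*P + q*(s*x)/c -> 0 <= x <= 1 -> 0 <= q ->
  0 <= 2*s*c/((1+s)*(1+c)) - (1-s)*Q <= 2*q.
Proof.
  intros Hs Hc H1 HQ HG HK Hx Hq.
  assert (Hs1 : s < 1) by nra.
  set (E := 2*s*c/((1+s)*(1+c)) - (1-s)*Q).
  assert (Id: 2*s*s*c/((1+s)*(1+c)) - 2*(1-s)*(1-c)/c = 2*(s*s+c*c-1)/((1+s)*(1+c)*c)) by (field; lra).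
  rewrite H1 in Id. replace (1-1) with 0 in Id by ring. unfold Rdiv in Id at 3. rewrite Rmult_0_r, Rmult_0_l in Id.
  assert (sE : s*E = 2*(1-s)*(1-c*P)/c).
  { unfold E. replace (s * (2 * s * c / ((1 + s) * (1 + c)) - (1 - s) * Q)) with
      (2*s*s*c/((1+s)*(1+c)) - (1-s)*(s*Q)) by (field; lra).
    rewrite HQ. replace (2*s*s*c/((1+s)*(1+c))) with (2*(1-s)*(1-c)/c) by lra. field. lra. }
  assert (E_eq : E = 2*(1-s)*(1-c*P)/(s*c)) by (apply Rmult_eq_reg_l with s; [rewrite sE; field; lra | lra]).
  split.
  - rewrite E_eq. apply Rmult_le_pos. apply Rmult_le_pos; lra. apply Rlt_le, Rinv_0_lt_compat. nra.
  - rewrite E_eq.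
    assert (B : 1 - c*P <= q*(s*x)/c) by lra.
    apply Rle_trans with (2*(1-s)*(q*(s*x)/c)/(s*c)).
    + unfold Rdiv at 1 3. apply Rmult_le_compat_r. apply Rlt_le, Rinv_0_lt_compat; nra.
      apply Rmult_le_compat_l; lra.
    + replace (2*(1-s)*(q*(s*x)/c)/(s*c)) with (2*q*x*(1-s)/(c*c)) by (field; lra).
      replace (c*c) with ((1-s)*(1+s)) by nra.
      replace (2*q*x*(1-s)/((1-s)*(1+s))) with (2*q*x/(1+s)) by (field; lra).
      apply Rmult_le_reg_r with (1+s). lra. unfold Rdiv. rewrite Rmult_assoc, Rinv_l by lra. nra.
Qed.

Lemma E_bound N t : 0 < t < PI/2 -> 0 <= fth t - (1 - sin t) * Qs N t <= 2 * cc (S N).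
Proof.
  intros Ht. assert (HP := PI_RGT_0).
  assert (Hs : 0 < sin t) by (apply sin_gt_0; lra).
  assert (Hc : 0 < cos t) by (apply cos_gt_0; lra).
  assert (HG : cos t * Ps N (sin t) <= 1).
  { replace 1 with (cos 0 * Ps N (sin 0)) by (rewrite sin_0, cos_0, Ps_0; ring).
    apply (mono_le (fun u => cos u * Ps N (sin u)) (fun u => - (2 * INR N + 1) * cc N * sin u ^ (2*N+1)) 0 t).
    lra. intros; apply G_der.
    intros u Hu. assert (0 <= sin u) by (apply sin_ge_0; lra). assert (0 <= INR N) by apply pos_INR.
    assert (0 <= sin u ^ (2*N+1)) by (apply pow_le; lra). assert (P := cc_pos N).
    assert (0 <= (2 * INR N + 1) * cc N * sin u ^ (2*N+1)) by (apply Rmult_le_pos; [apply Rmult_le_pos|]; lra). lra. }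
  assert (HK : 1 <= cos t * Ps N (sin t) + cc (S N) * (sin t ^ (S (2*N+1)) / cos t)).
  { replace 1 with (cos 0 * Ps N (sin 0) + cc (S N) * (sin 0 ^ (S (2*N+1)) / cos 0)) at 1.
    2:{ rewrite sin_0, cos_0, Ps_0. rewrite <- tech_pow_Rmult. field. }
    apply (mono_ge (fun u => cos u * Ps N (sin u) + cc (S N) * (sin u ^ (S (2*N+1)) / cos u))
                   (fun u => cc (S N) * sin u ^ (S (S (2*N+1))) / (cos u * cos u)) 0 t).
    lra. intros u Hu. apply K_der. assert (0 < cos u) by (apply cos_gt_0; lra). lra.
    intros u Hu. assert (0 <= sin u) by (apply sin_ge_0; lra). assert (0 < cos u) by (apply cos_gt_0; lra).
    assert (0 <= sin u ^ (S (S (2*N+1)))) by (apply pow_le; lra). assert (P := cc_pos (S N)).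
    apply Rmult_le_pos. apply Rmult_le_pos; lra. apply Rlt_le, Rinv_0_lt_compat. nra. }
  rewrite <- tech_pow_Rmult in HK.
  assert (Hx : 0 <= sin t ^ (2*N+1) <= 1).
  { split. apply pow_le; lra. rewrite <- (pow1 (2*N+1)). apply pow_incr. split. lra. apply SIN_bound. }
  unfold fth.
  assert (HK' : 1 <= cos t * Ps N (sin t) + cc (S N) * (sin t * sin t ^ (2*N+1)) / cos t)
    by (unfold Rdiv in *; rewrite Rmult_assoc; exact HK).
  apply (alg_E (sin t) (cos t) (Ps N (sin t)) (Qs N t) (cc (S N)) (sin t ^ (2*N+1))).
  lra. lra. assert (H:= sin2_cos2 t). unfold Rsqr in H. lra.
  apply Ps_Qs. exact HG. exact HK'. exact Hx. left; apply cc_pos.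
Qed.

Lemma key N : exists e, PI * Ss N = Hs N - PI + 4 * ln 2 + e /\ 0 <= e <= PI * cc (S N).
Proof.
  assert (HP := PI2_pos).
  assert (H := isR_minus _ _ _ _ _ _ f_int (Q_int N)).
  exists (PI - 4 * ln 2 - (Hs N - PI * Ss N)). split. lra.
  split.
  - assert (L := is_RInt_le (fun _ => 0) _ 0 (PI/2) _ _ ltac:(lra) (isR_const 0 (PI/2) 0) H).
    assert (0 <= PI / 2 - 0) by lra.
    apply Rle_trans with ((PI / 2 - 0) * 0). lra. apply L. intros x Hx. apply (E_bound N x Hx).
  - assert (L := is_RInt_le _ (fun _ => 2 * cc (S N)) 0 (PI/2) _ _ ltac:(lra) H (isR_const 0 (PI/2) (2 * cc (S N)))).
    replace (PI * cc (S N)) with ((PI / 2 - 0) * (2 * cc (S N))) by field.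
    apply L. intros x Hx. apply (E_bound N x Hx).
Qed.


Fixpoint pp (Nr : R) (m : nat) (u : R) : R := match m with O => 0 | S k => pp Nr k u + (1/Nr) * (1 - u/Nr) ^ k end.
Fixpoint PP (Nr : R) (m : nat) (u : R) : R := match m with O => 0 | S k => PP Nr k u - (1 - u/Nr) ^ (S k) / INR (S k) end.

Lemma PP_der Nr m u : Nr <> 0 -> is_derive (PP Nr m) u (pp Nr m u).
Proof.
  intro HN. induction m.
  - eapply der_val. apply (is_derive_const 0). reflexivity.
  - assert (H2 : is_derive (fun u => - ((1 - u/Nr) ^ (S m) / INR (S m))) u ((1/Nr) * (1 - u/Nr) ^ m)).
    { assert (INR (S m) <> 0) by (apply not_0_INR; lia).
      auto_derive. split; auto. simpl pred.
      change (match m with 0%nat => 1 | S _ => INR m + 1 end) with (INR (S m)).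
      change ((1 - u/Nr)^m) with ((1 + - (u * / Nr))^m). set (p := (1 + - (u * / Nr))^m). field. split; auto. }
    eapply der_ext. 2: exact (der_plus _ _ _ _ _ IHm H2). intro; cbn [PP]. lra.
Qed.

Lemma pp_exd Nr m u : ex_derive (pp Nr m) u.
Proof.
  induction m.
  - exists 0. apply (is_derive_const 0).
  - destruct IHm as [l Hl].
    assert (H2 : ex_derive (fun u => (1/Nr) * (1 - u/Nr) ^ m) u) by (auto_derive; auto).
    destruct H2 as [l2 H2]. exists (l + l2). apply (der_plus _ _ _ _ _ Hl H2).
Qed.

Lemma pp_int Nr m x y : Nr <> 0 -> x <= y -> is_RInt (pp Nr m) x y (PP Nr m y - PP Nr m x).
Proof.
  intros HN Hxy. apply FTC. auto. intros; apply PP_der; auto.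
  intros; apply cont_of_der, pp_exd.
Qed.

Lemma PP_N Nr m : Nr <> 0 -> PP Nr m Nr = 0.
Proof. intro HN. induction m. reflexivity. cbn [PP]. rewrite IHm. replace (1 - Nr/Nr) with 0 by (field; auto).
  rewrite pow_i by lia. lra. Qed.

Lemma PP_0 Nr m : PP Nr m 0 = - Hs m.
Proof. induction m. simpl; lra. cbn [PP Hs]. rewrite IHm. replace (1 - 0/Nr) with 1 by (unfold Rdiv; lra). rewrite pow1. lra. Qed.

Lemma pp_id Nr m u : u <> 0 -> Nr <> 0 -> pp Nr m u * u = 1 - (1 - u/Nr) ^ m.
Proof.
  intros Hu HN. induction m. simpl; lra.
  cbn [pp]. rewrite Rmult_plus_distr_r, IHm. rewrite <- tech_pow_Rmult.
  set (p := (1 - u/Nr)^m). field. auto.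
Qed.

Lemma pp_bnd Nr m u : 0 < Nr -> 0 <= u <= Nr -> 0 <= pp Nr m u <= INR m / Nr.
Proof.
  intros HN Hu. assert (0 <= 1 - u/Nr <= 1).
  { split. apply Rmult_le_reg_r with Nr; auto. field_simplify; lra.
    assert (0 <= u/Nr) by (apply Rmult_le_pos; [lra| left; apply Rinv_0_lt_compat; lra]). lra. }
  induction m. simpl; split; lra.
  cbn [pp]. rewrite S_INR. assert (0 <= (1 - u/Nr)^m <= 1).
  { split. apply pow_le; lra. apply Rle_trans with (1^m); [apply pow_incr; split; lra | rewrite pow1; lra]. }
  assert (0 < 1/Nr) by (apply Rdiv_lt_0_compat; lra).
  split. apply Rplus_le_le_0_compat. lra. apply Rmult_le_pos; lra.
  replace ((INR m + 1)/Nr) with (INR m / Nr + 1/Nr) by (field; lra).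
  apply Rplus_le_compat. lra. rewrite <- (Rmult_1_r (1/Nr)) at 2. apply Rmult_le_compat_l; lra.
Qed.

Lemma exp_pow_n x n : exp x ^ n = exp (INR n * x).
Proof. induction n. simpl. rewrite Rmult_0_l, exp_0. lra. rewrite <- tech_pow_Rmult, IHn, <- exp_plus, S_INR. f_equal. ring. Qed.

Lemma bern y n : -1 <= y -> 1 + INR n * y <= (1 + y) ^ n.
Proof.
  intro Hy. induction n. simpl; lra.
  rewrite <- tech_pow_Rmult, S_INR.
  apply Rle_trans with ((1 + y) * (1 + INR n * y)).
  assert (0 <= INR n) by apply pos_INR. nra.
  apply Rmult_le_compat_l; lra.
Qed.

Lemma q_le_exp Nr n u : 0 < Nr -> Nr = INR n -> 0 <= u <= Nr -> (1 - u/Nr) ^ n <= exp (- u).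
Proof.
  intros HN E Hu. assert (0 <= u/Nr <= 1).
  { split. apply Rmult_le_pos; [lra| left; apply Rinv_0_lt_compat; lra].
    apply Rmult_le_reg_r with Nr; auto. field_simplify; lra. }
  apply Rle_trans with (exp (- (u/Nr)) ^ n).
  apply pow_incr. split. lra. generalize (exp_ineq1_le (- (u/Nr))). lra.
  rewrite exp_pow_n, <- E. right. f_equal. field. lra.
Qed.

Lemma exp_le_q Nr n u : 0 < Nr -> Nr = INR n -> 0 <= u <= Nr -> exp (- u) * (1 - u*u/Nr) <= (1 - u/Nr) ^ n.
Proof.
  intros HN E Hu. assert (0 <= u/Nr <= 1).
  { split. apply Rmult_le_pos; [lra| left; apply Rinv_0_lt_compat; lra].
    apply Rmult_le_reg_r with Nr; auto. field_simplify; lra. }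
  assert (A : (1 + u/Nr) ^ n <= exp u).
  { apply Rle_trans with (exp (u/Nr) ^ n). apply pow_incr. split. lra. apply exp_ineq1_le.
    rewrite exp_pow_n, <- E. right. f_equal. field. lra. }
  assert (B : 1 - u*u/Nr <= (1 - (u/Nr)*(u/Nr)) ^ n).
  { replace (1 - u*u/Nr) with (1 + INR n * (- ((u/Nr)*(u/Nr)))) by (rewrite <- E; field; lra).
    replace (1 - (u/Nr)*(u/Nr)) with (1 + - ((u/Nr)*(u/Nr))) by ring. apply bern. nra. }
  assert (C : (1 - (u/Nr)*(u/Nr)) ^ n = (1 - u/Nr)^n * (1 + u/Nr)^n).
  { rewrite <- Rpow_mult_distr. f_equal. ring. }
  assert (Q0 : 0 <= (1 - u/Nr)^n) by (apply pow_le; lra).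
  assert (Ep : 0 < exp (-u)) by apply exp_pos.
  assert (Eu : exp (-u) * exp u = 1) by (rewrite <- exp_plus; replace (-u+u) with 0 by ring; apply exp_0).
  apply Rle_trans with (exp (-u) * ((1 - u/Nr)^n * (1 + u/Nr)^n)).
  rewrite <- C. apply Rmult_le_compat_l; lra.
  apply Rle_trans with (exp (-u) * ((1 - u/Nr)^n * exp u)).
  apply Rmult_le_compat_l. lra. apply Rmult_le_compat_l; lra.
  right. rewrite Rmult_comm, Rmult_assoc, (Rmult_comm (exp u)), Eu. ring.
Qed.

Lemma core N a J : (1 <= N)%nat -> 0 < a < 1 -> is_RInt (fun u => ln u * exp (- u)) a (INR N) J ->
  exists Dv v0, Hs N = ln (INR N) * (1 - exp (- INR N)) - ln a * (1 - exp (- a)) - J + Dv + v0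
     /\ 0 <= Dv <= 1 / INR N /\ 0 <= v0 <= a.
Proof.
  intros HN Ha HJ. set (Nr := INR N) in *.
  assert (HN1 : 1 <= Nr) by (unfold Nr; apply (le_INR 1); lia).
  assert (HA : is_RInt (fun u => ln u * exp (- u) + (1 - exp (- u)) / u) a Nr
                 (ln Nr * (1 - exp (- Nr)) - ln a * (1 - exp (- a)))).
  { apply (FTC (fun u => ln u * (1 - exp (- u)))). lra.
    - intros u Hu. auto_derive. lra. field. lra.
    - intros u Hu. apply cont_of_der. auto_derive. repeat split; lra. }
  assert (Hp1 := pp_int Nr N a Nr ltac:(lra) ltac:(lra)).
  assert (Hp0 := pp_int Nr N 0 a ltac:(lra) ltac:(lra)).
  assert (HD := isR_minus _ _ _ _ _ _ HJ (isR_minus _ _ _ _ _ _ HA Hp1)).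
  set (Dv := J - (ln Nr * (1 - exp (- Nr)) - ln a * (1 - exp (- a)) - (PP Nr N Nr - PP Nr N a))) in HD.
  apply (isR_ext _ (fun u => (exp (- u) - (1 - u/Nr) ^ N) / u)) in HD; [| lra |].
  2:{ intros u Hu. assert (E := pp_id Nr N u ltac:(lra) ltac:(lra)).
      replace (pp Nr N u) with ((1 - (1 - u / Nr) ^ N) / u) by (rewrite <- E; field; lra). set (p := (1 - u/Nr)^N). field. lra. }
  assert (HB : is_RInt (fun u => u * exp (- u) / Nr) a Nr ((a+1) * exp (-a) / Nr - (Nr+1) * exp (- Nr) / Nr)).
  { eapply is_RInt_val. apply (FTC (fun u => - (u+1) * exp (- u) / Nr)). lra.
    - intros u Hu. auto_derive. lra. field. lra.
    - intros u Hu. apply cont_of_der. auto_derive. lra.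
    - field. lra. }
  exists Dv, (PP Nr N a - PP Nr N 0). split.
  { rewrite PP_0. unfold Dv. rewrite PP_N by lra. ring. }
  split. split.
  - assert (L := is_RInt_le (fun _ => 0) _ a Nr _ _ ltac:(lra) (isR_const a Nr 0) HD).
    apply Rle_trans with ((Nr - a) * 0). lra. apply L.
    intros u Hu. assert (Q := q_le_exp Nr N u ltac:(lra) eq_refl ltac:(lra)).
    apply Rmult_le_pos. lra. left; apply Rinv_0_lt_compat; lra.
  - assert (L := is_RInt_le _ _ a Nr _ _ ltac:(lra) HD HB).
    apply Rle_trans with ((a+1) * exp (-a) / Nr - (Nr+1) * exp (- Nr) / Nr).
    apply L. intros u Hu.
    assert (Q := exp_le_q Nr N u ltac:(lra) eq_refl ltac:(lra)).
    assert (Ep : 0 < exp (- u)) by apply exp_pos.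
    set (p := (1 - u/Nr)^N) in *.
    assert (R1 : exp (-u) * (1 - u*u/Nr) = exp (-u) - u * (u * exp (-u) / Nr)) by (field; lra).
    assert (R2 : exp (-u) - p <= u * (u * exp (-u) / Nr)) by lra.
    apply Rmult_le_reg_l with u. lra.
    replace (u * ((exp (- u) - p) / u)) with (exp (- u) - p) by (field; lra). exact R2.
    assert (X1 : (a + 1) * exp (- a) <= 1).
    { rewrite exp_Ropp. generalize (exp_ineq1_le a). intro. assert (0 < exp a) by apply exp_pos.
      apply Rmult_le_reg_r with (exp a). auto. rewrite Rmult_assoc, Rinv_l by lra. lra. }
    assert (X2 : 0 <= (Nr + 1) * exp (- Nr)) by (apply Rmult_le_pos; [lra | left; apply exp_pos]).
    assert (X3 : 0 < / Nr) by (apply Rinv_0_lt_compat; lra).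
    assert (Y1: (a+1)*exp(-a) * /Nr <= 1 * /Nr) by (apply Rmult_le_compat_r; lra).
    assert (Y2: 0 <= (Nr+1)*exp(-Nr) * /Nr) by (apply Rmult_le_pos; lra). unfold Rdiv. lra.
  - assert (HN' : INR N / Nr = 1) by (change (INR N) with Nr; field; lra).
    split.
    + assert (L := is_RInt_le (fun _ => 0) _ 0 a _ _ ltac:(lra) (isR_const 0 a 0) Hp0).
      apply Rle_trans with ((a - 0) * 0). lra. apply L.
      intros u Hu. apply (pp_bnd Nr N u); lra.
    + assert (L := is_RInt_le _ (fun _ => 1) 0 a _ _ ltac:(lra) Hp0 (isR_const 0 a 1)).
      apply Rle_trans with ((a - 0) * 1). apply L. 2: lra.
      intros u Hu. rewrite <- HN'. apply (pp_bnd Nr N u); lra.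
Qed.

Lemma ln_le_x x : 0 < x -> ln x <= x - 1.
Proof. intro H. generalize (exp_ineq1_le (ln x)). rewrite exp_ln by auto. lra. Qed.

Lemma lnN_bound x : 1 <= x -> 0 <= ln x * exp (- x) <= 4 / x.
Proof.
  intro H. assert (L0 : 0 <= ln x) by (rewrite <- ln_1; apply ln_le; lra).
  assert (L1 : ln x <= x) by (generalize (ln_le_x x ltac:(lra)); lra).
  assert (E : x * x / 4 <= exp x).
  { replace (exp x) with (exp (x/2) * exp (x/2)) by (rewrite <- exp_plus; f_equal; field).
    generalize (exp_ineq1_le (x/2)). intro. nra. }
  assert (Ep : 0 < exp (-x)) by apply exp_pos.
  assert (Ex : exp (-x) * exp x = 1) by (rewrite <- exp_plus; replace (-x+x) with 0 by ring; apply exp_0).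
  split. apply Rmult_le_pos; lra.
  apply Rmult_le_reg_r with (x * x / 4). nra.
  apply Rle_trans with (x * (exp (-x) * (x * x / 4))).
  rewrite <- Rmult_assoc. apply Rmult_le_compat_r. nra. apply Rmult_le_compat_r; lra.
  apply Rle_trans with (x * (exp (-x) * exp x)). apply Rmult_le_compat_l. lra. apply Rmult_le_compat_l; lra.
  rewrite Ex. right. field. lra.
Qed.

Lemma lna_bound d : 0 < d < 1 -> 0 <= - ln (d*d) * (1 - exp (- (d*d))) <= 2 * d.
Proof.
  intro H. rewrite ln_mult by lra.
  assert (L : ln d < 0) by (rewrite <- ln_1; apply ln_increasing; lra).
  assert (L2 : - ln d <= 1 / d).
  { rewrite <- ln_Rinv by lra. generalize (ln_le_x (/ d) ltac:(apply Rinv_0_lt_compat; lra)). unfold Rdiv. lra. }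
  assert (E1 : 1 - d*d <= exp (- (d*d))) by (generalize (exp_ineq1_le (- (d*d))); lra).
  assert (E2 : exp (- (d*d)) <= 1).
  { rewrite exp_Ropp. assert (1 <= exp (d*d)) by (generalize (exp_ineq1_le (d*d)); nra).
    rewrite <- Rinv_1. apply Rinv_le_contravar; lra. }
  split. apply Rmult_le_pos; lra.
  replace (- (ln d + ln d)) with (2 * - ln d) by ring. apply Rle_trans with (2 * (- ln d) * (d * d)). apply Rmult_le_compat_l; lra.
  apply Rle_trans with (2 * (1/d) * (d*d)). apply Rmult_le_compat_r. nra. lra.
  right. field. lra.
Qed.

Lemma gamma_lim g : is_euler_gamma g ->
  forall eps, 0 < eps -> exists N0, forall N, (N >= N0)%nat -> Rabs (Hs N - ln (INR N) - g) < eps.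
Proof.
  intros hg eps He.
  destruct (hg (eps/5) ltac:(lra)) as [d [M [Hd [HM Hint]]]].
  destruct (archimed (Rmax M (20/eps))) as [Hz _].
  assert (Hz0 : (0 <= up (Rmax M (20/eps)))%Z).
  { apply le_IZR. apply Rlt_le, Rle_lt_trans with (Rmax M (20/eps)); auto.
    apply Rle_trans with M; [lra| apply Rmax_l]. }
  exists (S (Z.to_nat (up (Rmax M (20/eps))))).
  intros N HN.
  assert (HNr : Rmax M (20/eps) < INR N).
  { apply Rlt_le_trans with (IZR (up (Rmax M (20/eps)))); auto.
    rewrite <- (Z2Nat.id (up (Rmax M (20/eps)))) by lia. rewrite <- INR_IZR_INZ. apply le_INR. lia. }
  assert (H1 : M < INR N) by (apply Rle_lt_trans with (Rmax M (20/eps)); [apply Rmax_l|auto]).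
  assert (H2 : 20/eps < INR N) by (apply Rle_lt_trans with (Rmax M (20/eps)); [apply Rmax_r|auto]).
  assert (HN1 : (1 <= N)%nat) by lia.
  assert (HNr1 : 1 <= INR N) by (apply (le_INR 1); lia).
  set (del := Rmin (1/2) (Rmin (eps/10) d)).
  assert (Hdel : 0 < del /\ del <= 1/2 /\ del <= eps/10 /\ del <= d).
  { unfold del. repeat split.
    apply Rmin_pos. lra. apply Rmin_pos; lra.
    apply Rmin_l. apply Rle_trans with (Rmin (eps/10) d). apply Rmin_r. apply Rmin_l.
    apply Rle_trans with (Rmin (eps/10) d). apply Rmin_r. apply Rmin_r. }
  destruct Hdel as [D1 [D2 [D3 D4]]].
  set (a := del * del).
  assert (Ha : 0 < a < d) by (unfold a; split; nra).
  destruct (Hint a (INR N) Ha H1) as [pr Hpr].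
  assert (HJ : is_RInt (fun u => ln u * exp (- u)) a (INR N) (RiemannInt pr)).
  { rewrite <- RInt_Reals. apply RInt_correctR. apply ex_RInt_Reals_1. exact pr. }
  destruct (core N a (RiemannInt pr) HN1 ltac:(unfold a; split; nra) HJ) as [Dv [v0 [E [HDv Hv0]]]].
  rewrite E.
  assert (B1 := lnN_bound (INR N) HNr1).
  assert (B2 := lna_bound del ltac:(lra)). fold a in B2.
  assert (B3 : 4 / INR N < eps / 5).
  { apply Rmult_lt_reg_r with (INR N * 5 / eps). apply Rdiv_lt_0_compat; lra.
    replace (4 / INR N * (INR N * 5 / eps)) with (20/eps) by (field; lra).
    replace (eps / 5 * (INR N * 5 / eps)) with (INR N) by (field; lra). auto. }
  assert (B4 : 1 / INR N < eps / 5).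
  { apply Rle_lt_trans with (4 / INR N); auto. unfold Rdiv. apply Rmult_le_compat_r.
    left; apply Rinv_0_lt_compat; lra. lra. }
  assert (B5 : a <= eps/10) by (unfold a; nra).
  replace (ln (INR N) * (1 - exp (- INR N)) - ln a * (1 - exp (- a)) - RiemannInt pr + Dv + v0 - ln (INR N) - g)
    with (- (RiemannInt pr - - g) - ln (INR N) * exp (- INR N) + (- ln a * (1 - exp (- a))) + Dv + v0) by ring.
  apply Rabs_def1.
  - assert (Hp := Rabs_def2 _ _ Hpr). lra.
  - assert (Hp := Rabs_def2 _ _ Hpr). lra.
Qed.

Lemma R_N_Ss N : R_N N = Ss N.
Proof.
  destruct N. reflexivity. unfold R_N.
  induction N. simpl. unfold cb_term. change (C (2 * 1) 1 / 2 ^ (2 * 1)) with (cc 1). lra.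
  rewrite tech5, IHN. cbn [Ss]. unfold cb_term. reflexivity.
Qed.

Theorem mainTheorem11 (g : R) (hg : is_euler_gamma g) :
  Un_cv (fun N : nat => R_N N - (ln (INR N) + alpha g) / PI) 0.
Proof.
  intros eps He. assert (HP := PI_RGT_0).
  destruct (gamma_lim g hg (eps * PI / 2) ltac:(nra)) as [N0 HN0].
  destruct (archimed (4 / (eps * eps))) as [Hz _].
  assert (Hz0 : (0 <= up (4 / (eps*eps)))%Z).
  { apply le_IZR. apply Rlt_le, Rle_lt_trans with (4 / (eps*eps)); auto.
    left; apply Rdiv_lt_0_compat; nra. }
  exists (S (N0 + Z.to_nat (up (4 / (eps*eps))))).
  intros n Hn.
  assert (Hn1 : 4 / (eps*eps) < INR n).
  { apply Rlt_le_trans with (IZR (up (4 / (eps*eps)))); auto.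
    rewrite <- (Z2Nat.id (up (4/(eps*eps)))) by lia. rewrite <- INR_IZR_INZ. apply le_INR. lia. }
  assert (Hg := HN0 n ltac:(lia)).
  destruct (key n) as [e [Ee He']].
  assert (Hc : cc (S n) < eps / 2).
  { assert (C2 := cc2_le (S n)). rewrite S_INR in C2. assert (P := cc_pos (S n)).
    assert (0 <= INR n) by apply pos_INR.
    assert (Q : 1 / (INR n + 1 + 1) < eps * eps / 4).
    { apply Rmult_lt_reg_r with ((INR n + 1 + 1) * 4 / (eps * eps)). apply Rdiv_lt_0_compat; nra.
      replace (1 / (INR n + 1 + 1) * ((INR n + 1 + 1) * 4 / (eps * eps))) with (4 / (eps*eps)) by (field; nra).
      replace (eps * eps / 4 * ((INR n + 1 + 1) * 4 / (eps * eps))) with (INR n + 1 + 1) by (field; nra). lra. }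
    nra. }
  rewrite R_N_Ss. unfold alpha, Rdist.
  assert (L16 : ln 16 = 4 * ln 2).
  { replace 16 with (2 ^ 4) by (simpl; lra). rewrite ln_pow by lra. simpl INR. lra. }
  replace (Ss n - (ln (INR n) + (g + ln 16 - PI)) / PI - 0) with ((Hs n - ln (INR n) - g + e) / PI).
  2:{ apply Rmult_eq_reg_l with PI. 2: lra. rewrite L16. transitivity (Hs n - ln (INR n) - g + e). field; lra.
      transitivity (PI * Ss n - (ln (INR n) + (g + 4 * ln 2 - PI))). lra. field; lra. }
  rewrite Rabs_div by lra. rewrite (Rabs_right PI) by lra.
  apply Rmult_lt_reg_r with PI. lra. unfold Rdiv. rewrite Rmult_assoc, Rinv_l by lra.
  apply Rle_lt_trans with (Rabs (Hs n - ln (INR n) - g) + Rabs e).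
  replace (Hs n - ln (INR n) - g + e) with ((Hs n - ln (INR n) - g) + e) by ring. rewrite Rmult_1_r. apply Rabs_triang.
  rewrite (Rabs_right e) by lra. nra.
Qed.
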